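(* Let $G$ be a multiplicative monoid with identity, let $N$ be a $G$-graded near-ring and let $P$ be a graded weakly prime ideal of $N$ with $P^2=\{0\}$. If $I$ is a graded ideal of $N$ with $I^2\subseteq P$, then $I^2=\{0\}$.
   Context: A near-ring $(N,+,\cdot)$ is a set with two binary operations such that $(N,+)$ is a group (not necessarily abelian), $(N,\cdot)$ is a semigroup, and $(a+b)y = ay+by$ for all $a,b,y\in N$. For a multiplicative monoid $G$ with identity, $N$ is a $G$-graded near-ring if there is a family $\{N_\sigma\}_{\sigma\in G}$ of additive normal subgroups of $N$ with $N=\bigoplus_{\sigma\in G}N_\sigma$ and $N_\sigma N_\tau\subseteq N_{\sigma\tau}$. An ideal $P$ of $N$ is graded if $P=\bigoplus_{\sigma}(P\cap N_\sigma)$. For ideals $I,J$, $IJ$ denotes their product and $I^2=II$. A graded ideal $P$ is graded weakly prime if for all graded ideals $I,J$ with $\{0\}\neq IJ\subseteq P$, either $I\subseteq P$ or $J\subseteq P$. *)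

(* Defs.v *)
From Stdlib Require Import List.
Import ListNotations.
Set Implicit Arguments.

(* A (right) near-ring: (N,+) a group (not necessarily abelian),
   (N,.) a semigroup, and (a+b)y = ay + by. *)
Record NearRing := {
  nr_car :> Type;
  nr_add : nr_car -> nr_car -> nr_car;
  nr_zero : nr_car;
  nr_opp : nr_car -> nr_car;
  nr_mul : nr_car -> nr_car -> nr_car;
  nr_addA : forall a b c, nr_add a (nr_add b c) = nr_add (nr_add a b) c;
  nr_add0l : forall a, nr_add nr_zero a = a;
  nr_add0r : forall a, nr_add a nr_zero = a;
  nr_addNl : forall a, nr_add (nr_opp a) a = nr_zero;
  nr_addNr : forall a, nr_add a (nr_opp a) = nr_zero;
  nr_mulA : forall a b c, nr_mul a (nr_mul b c) = nr_mul (nr_mul a b) c;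
  nr_mulDl : forall a b y, nr_mul (nr_add a b) y = nr_add (nr_mul a y) (nr_mul b y)
}.

Record Monoid := {
  mon_car :> Type;
  mon_op : mon_car -> mon_car -> mon_car;
  mon_one : mon_car;
  mon_opA : forall a b c, mon_op a (mon_op b c) = mon_op (mon_op a b) c;
  mon_op1l : forall a, mon_op mon_one a = a;
  mon_op1r : forall a, mon_op a mon_one = a
}.

Section NearRingDefs.
Variable N : NearRing.
Local Notation "a + b" := (nr_add N a b).
Local Notation "- a" := (nr_opp N a).
Local Notation "0" := (nr_zero N).
Local Notation "a * b" := (nr_mul N a b).

Definition subset (A B : N -> Prop) : Prop := forall x, A x -> B x.

Definition is_zero_set (A : N -> Prop) : Prop := forall x, A x <-> x = 0.

Definition normal_subgroup (S : N -> Prop) : Prop :=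
  S 0 /\ (forall x y, S x -> S y -> S (x + y)) /\ (forall x, S x -> S (- x)) /\
  (forall n x, S x -> S ((n + x) + - n)).

(* ideal of a (right) near-ring (Pilz): normal subgroup I with
   IN <= I and n(n'+i) - nn' in I. *)
Definition ideal (I : N -> Prop) : Prop :=
  normal_subgroup I /\ (forall i n, I i -> I (i * n)) /\
  (forall n n' i, I i -> I (n * (n' + i) + - (n * n'))).

Definition prodset (I J : N -> Prop) : N -> Prop :=
  fun x => exists a b, I a /\ J b /\ x = a * b.

Definition lsum (l : list N) : N := fold_right (fun a b => a + b) 0 l.

(* The internal direct sum is expressed as: every element
   is a finite sum of homogeneous components with pairwise distinct degrees,
   and such a sum is 0 only if all components are 0. *)
Definition graded (G : Monoid) (Ns : G -> N -> Prop) : Prop :=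
  (forall s, normal_subgroup (Ns s)) /\
  (forall s t x y, Ns s x -> Ns t y -> Ns (mon_op G s t) (x * y)) /\
  (forall x, exists l : list (G * N),
      NoDup (map fst l) /\ Forall (fun p => Ns (fst p) (snd p)) l /\
      x = lsum (map snd l)) /\
  (forall l : list (G * N),
      NoDup (map fst l) -> Forall (fun p => Ns (fst p) (snd p)) l ->
      lsum (map snd l) = 0 -> Forall (fun p => snd p = 0) l).

Definition graded_ideal (G : Monoid) (Ns : G -> N -> Prop) (P : N -> Prop) : Prop :=
  ideal P /\
  (forall x, P x -> exists l : list (G * N),
      NoDup (map fst l) /\ Forall (fun p => Ns (fst p) (snd p) /\ P (snd p)) l /\
      x = lsum (map snd l)).

Definition graded_weakly_prime (G : Monoid) (Ns : G -> N -> Prop) (P : N -> Prop) : Prop :=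
  @graded_ideal G Ns P /\
  (forall I J, @graded_ideal G Ns I -> @graded_ideal G Ns J ->
     ~ is_zero_set (prodset I J) -> subset (prodset I J) P ->
     subset I P \/ subset J P).

End NearRingDefs.

(* Main.v *)
Require Import Defs.
From Stdlib Require Import Classical.

Lemma mul0l (N : NearRing) (y : N) : nr_mul N (nr_zero N) y = nr_zero N.
Proof.
  pose proof (nr_mulDl N (nr_zero N) (nr_zero N) y) as H.
  rewrite nr_add0l in H.
  remember (nr_mul N (nr_zero N) y) as z eqn:Ez. clear Ez.
  assert (H2 : nr_add N (nr_opp N z) z = nr_add N (nr_opp N z) (nr_add N z z)) by (rewrite <- H; reflexivity).
  rewrite nr_addA, nr_addNl, nr_add0l in H2. symmetry; exact H2.
Qed.

Theorem theorem6 (G : Monoid) (N : NearRing) (Ns : G -> N -> Prop)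
  (HN : @graded N G Ns) (P : N -> Prop) (HP : @graded_weakly_prime N G Ns P)
  (HP2 : @is_zero_set N (@prodset N P P))
  (I : N -> Prop) (HI : @graded_ideal N G Ns I)
  (HI2 : @subset N (@prodset N I I) P) :
  @is_zero_set N (@prodset N I I).
Proof.
  destruct (classic (@is_zero_set N (@prodset N I I))) as [H|H]; [exact H|].
  destruct HP as [_ HP].
  assert (HIP : @subset N I P) by (destruct (HP I I HI HI H HI2); assumption).
  intros x; split.
  - intros (a & b & Ha & Hb & ->). apply HP2. exists a, b. auto.
  - intros ->. exists (nr_zero N), (nr_zero N).
    destruct HI as [[[H0 _] _] _].
    repeat split; auto. symmetry; apply mul0l.
Qed.
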